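(* Let $P,Q$ be posets with least elements and $\langle f,g\rangle:P\times Q\to P\times Q$ a monotone map (with $f:P\times Q\to P$, $g:P\times Q\to Q$, product ordered coordinatewise). Let $m,n\ge0$ be such that for every $x\in P$ the map $g_x=g(x,-)$ satisfies $\mu_y.g(x,y)=g_x^m(\bot)$, and such that the map $h(x)=f(x,\mu_y.g(x,y))$ satisfies $\mu.h=h^n(\bot)$. Then $\langle f,g\rangle$ has a least fixed point and $\mu.\langle f,g\rangle=\langle f,g\rangle^{(n+1)(m+1)-1}(\bot,\bot)$.
   Context: $\mu.k$ denotes the least fixed point of a monotone map $k$; $k^n$ the $n$-fold composite. *)

(* Defs.v *)
From HB Require Import structures.
From mathcomp Require Import all_boot all_order.
Set Implicit Arguments. Unset Strict Implicit. Unset Printing Implicit Defensive.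
Import Order.TTheory.
Local Open Scope order_scope.

Definition is_lfp (T : Type) (le : T -> T -> bool) (k : T -> T) (a : T) : Prop :=
  k a = a /\ forall b, k b = b -> le a b.

Definition prod_le (d1 d2 : Order.disp_t) (P : porderType d1) (Q : porderType d2)
  (u v : P * Q) : bool := (u.1 <= v.1) && (u.2 <= v.2).

Definition pair_fun (P Q : Type) (f : P -> Q -> P) (g : P -> Q -> Q) (u : P * Q) : P * Q :=
  (f u.1 u.2, g u.1 u.2).

(* Main.v *)
Require Import Defs.
From HB Require Import structures.
From mathcomp Require Import all_boot all_order.
Import Order.TTheory.
Local Open Scope order_scope.

Theorem mainTheorem14 (d1 d2 : Order.disp_t) (P : bPOrderType d1) (Q : bPOrderType d2)
  (f : P -> Q -> P) (g : P -> Q -> Q) (m n : nat)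
  (mono : forall (x x' : P) (y y' : Q), x <= x' -> y <= y' ->
            f x y <= f x' y' /\ g x y <= g x' y')
  (Hg : forall x : P, is_lfp <=%O (g x) (iter m (g x) \bot))
  (Hh : is_lfp <=%O (fun x : P => f x (iter m (g x) \bot))
                    (iter n (fun x : P => f x (iter m (g x) \bot)) \bot)) :
  is_lfp (@prod_le d1 d2 P Q) (@pair_fun P Q f g)
         (iter ((n.+1 * m.+1).-1) (@pair_fun P Q f g) (\bot, \bot)).
Proof.
set F := pair_fun f g.
set u := fun k => iter k F (\bot, \bot).
set h := (fun x : P => f x (iter m (g x) \bot)).
have Fmono : forall a b : P * Q, a.1 <= b.1 -> a.2 <= b.2 ->
    (F a).1 <= (F b).1 /\ (F a).2 <= (F b).2.
  by move=> [a1 a2] [b1 b2] /= H1 H2; move=> *; exact: mono.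
have chain : forall k, (u k).1 <= (u k.+1).1 /\ (u k).2 <= (u k.+1).2.
  elim=> [|k [IH1 IH2]]; first by rewrite !le0x.
  by rewrite /u !iterS; apply: Fmono.
have chain1 : forall k l, (k <= l)%N -> (u k).1 <= (u l).1.
  move=> k l /subnK <-; elim: (l - k)%N => [|d IH] //.
  by rewrite addSn; apply: le_trans IH (chain _).1.
have below : forall c, F c = c -> forall k, (u k).1 <= c.1 /\ (u k).2 <= c.2.
  move=> c Hc; elim=> [|k [IH1 IH2]]; first by rewrite !le0x.
  by rewrite /u iterS -Hc; apply: Fmono.
have inner : forall x N, x <= (u N).1 -> forall j, (j <= m)%N ->
    x <= (u (N + j)%N).1 /\ iter j (g x) \bot <= (u (N + j)%N).2.
  move=> x N HxN; elim=> [|j IH] Hj; first by rewrite addn0 HxN le0x.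
  have [IH1 IH2] := IH (ltnW Hj).
  split; first by apply: le_trans HxN (chain1 _ _ _); rewrite leq_addr.
  rewrite addnS /u iterS iterS /=. have := (mono _ _ _ _ IH1 IH2).2. done.
have outer : forall i, iter i h \bot <= (u (i * m.+1)%N).1.
  elim=> [|i IH]; first by rewrite le0x.
  have [I1 I2] := inner _ _ IH m (leqnn m).
  rewrite mulSn addnC addnS /u iterS iterS; exact: (mono _ _ _ _ I1 I2).1.
set c := (iter n h \bot, iter m (g (iter n h \bot)) \bot).
have Fc : F c = c.
  rewrite /F /pair_fun /c /=; congr pair; first exact: Hh.1.
  exact: (Hg _).1.
have ek : (n.+1 * m.+1).-1 = (n * m.+1 + m)%N.
  by rewrite mulSn addSn /= addnC.
have Huk : u (n * m.+1 + m)%N = c.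
  have [L1 L2] := inner _ _ (outer n) m (leqnn m).
  have [U1 U2] := below c Fc (n * m.+1 + m)%N.
  case E: (u _) L1 L2 U1 U2 => [a b] /= L1 L2 U1 U2.
  by rewrite /c; congr pair; apply/le_anti; rewrite ?L1 ?L2 ?U1 ?U2.
rewrite ek -/(u _) Huk; split=> // b Hb.
have [U1 U2] := below b Hb (n * m.+1 + m)%N.
by rewrite /prod_le -Huk U1 U2.
Qed.
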